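(* Let $T$ be a primed tableau, $1\le i\le k-1$, $j=i+1$, and suppose the $i$–$j$ reading subword of $T$ has an unbracketed $i$; let $x,E_x,S_x$ be as in the definition of $f_i$. (a) If $c(E_x)=j'$ (case F2, so $q=E_x$), then $c(S_q)>j$, where $S_q$ is the position directly below $q$. (b) If $c(E_x)\ge j$ and $c(S_x)\in\{j',j\}$ (case F3), then for every box of the ribbon defined in F3 that contains $j$, the box diagonally above and to the left of it contains $i$; and the Southwest-most box $q$ of this ribbon satisfies $c(q)=j'$.
   Context: Primed tableaux: Fix $k$. $X'_k=\{1'<1<2'<2<\dots<k'<k\}$; moving one step up in this chain is ''increasing by a half unit'' (e.g. $i'\to i$, $i\to (i+1)'$). A primed tableau of (skew) shape $\lambda/\mu$ is a filling of the diagram (English convention; ''below'' = next row down) with letters of $X'_k$, rows and columns weakly increasing, at most one $i'$ per row and at most one $i$ per column, for every $i$. For a position $p$, $c(p)$ is its entry, with $c(p)=\infty$ if $p$ is not a box of $T$. The reading word of $T$ is the word of its unprimed entries, read row by row left to right, from the bottom row to the top row. Bracketing: fix $i$, $j=i+1$. In the subword of the reading word consisting of the letters $i$ and $j$, repeatedly pair (bracket) a letter $j$ with a letter $i$ occurring later such that no unbracketed letters lie between them, until the unbracketed letters form a word $i^aj^b$. Operator $f_i$: if there is no unbracketed $i$, $f_i(T)=0$. Otherwise let $x$ be the box of $T$ corresponding to the rightmost unbracketed $i$; $E_x$ the position immediately right of $x$, $S_x$ the position immediately below $x$. Choose a box $q$: (F1) if $c(E_x)\ge j$ and $c(S_x)>j$,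 $q=x$; (F2) if $c(E_x)=j'$, $q=E_x$; (F3) if $c(E_x)\ge j$ and $c(S_x)\in\{j',j\}$, take the maximal ribbon (connected skew strip) starting at $S_x$ and extending by steps South and/or West consisting only of boxes with entries $j$ or $j'$, and let $q$ be its Southwest-most box. Then $f_i(T)$ is obtained from $T$ by increasing $c(x)$ by a half unit and then increasing $c(q)$ by a half unit (so if $q=x$ the entry of $x$ increases by a full unit). *)

(* Defs.v *)
From mathcomp Require Import all_boot.
Set Implicit Arguments. Unset Strict Implicit. Unset Printing Implicit Defensive.

(* Letters of X'_k are encoded as positive naturals:
     i' |-> 2i-1 ,  i |-> 2i   (i >= 1),
   so that the chain 1' < 1 < 2' < 2 < ... < k' < k becomes 1 < 2 < ... < 2k,
   "increasing by a half unit" is +1, and a letter is primed iff its code is odd. *)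
Definition unp (i : nat) : nat := i.*2.
Definition prm (i : nat) : nat := i.*2.-1.

(* Positions: (row, column), both 0-based, English convention
   (row r+1 is the row directly below row r, column c+1 is to the right). *)
Definition box := (nat * nat)%type.

(* A filling of a skew diagram lam/mu: lam, mu are partitions given as lists of
   row lengths (row 0 first), ent r c is the entry in row r, column c. *)
Record ptab := PTab { lam : seq nat; mu : seq nat; ent : nat -> nat -> nat }.

Definition in_shape (T : ptab) (p : box) : bool :=
  (nth 0 (mu T) p.1 <= p.2) && (p.2 < nth 0 (lam T) p.1).

Definition is_primed_tableau (k : nat) (T : ptab) : Prop :=
  [/\ sorted geq (lam T), sorted geq (mu T),
      (forall r, nth 0 (mu T) r <= nth 0 (lam T) r) &
      (forall p : box, in_shape T p -> 1 <= ent T p.1 p.2 <= k.*2)] /\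
  (
      (forall r c1 c2, in_shape T (r, c1) -> in_shape T (r, c2) -> c1 <= c2 ->
          ent T r c1 <= ent T r c2) /\
      (forall c r1 r2, in_shape T (r1, c) -> in_shape T (r2, c) -> r1 <= r2 ->
          ent T r1 c <= ent T r2 c)) /\
  ((* at most one i' per row *)
      (forall r c1 c2, in_shape T (r, c1) -> in_shape T (r, c2) -> c1 < c2 ->
          ent T r c1 = ent T r c2 -> ~~ odd (ent T r c1)) /\
      (* at most one i per column *)
      (forall c r1 r2, in_shape T (r1, c) -> in_shape T (r2, c) -> r1 < r2 ->
          ent T r1 c = ent T r2 c -> odd (ent T r1 c))).

(* c(p): Some (entry) if p is a box of T, None standing for infinity otherwise. *)
Definition cval (T : ptab) (p : box) : option nat :=
  if in_shape T p then Some (ent T p.1 p.2) else None.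

Definition geq_ext (o : option nat) (n : nat) : bool :=
  if o is Some v then n <= v else true.
Definition gt_ext (o : option nat) (n : nat) : bool :=
  if o is Some v then n < v else true.

Definition row_boxes (T : ptab) (r : nat) : seq box :=
  [seq (r, c) | c <- iota (nth 0 (mu T) r) (nth 0 (lam T) r - nth 0 (mu T) r)].

(* Reading word, as the sequence of the boxes carrying its letters:
   unprimed entries, rows bottom to top, each row left to right. *)
Definition reading_boxes (T : ptab) : seq box :=
  [seq p <- flatten [seq row_boxes T r | r <- rev (iota 0 (size (lam T)))]
     | ~~ odd (ent T p.1 p.2)].

Definition ij_boxes (T : ptab) (i : nat) : seq box :=
  [seq p <- reading_boxes T | (ent T p.1 p.2 == unp i) || (ent T p.1 p.2 == unp i.+1)].

(* Bracketing on a word w : seq bool over {i, j} (true = j, false = i),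
   with letters identified by their positions. A (partial) bracketing is a list
   of pairs (a, b) of positions: the letter j at a is bracketed with the i at b. *)
Definition bracketed (B : seq (nat * nat)) (p : nat) : bool :=
  has (fun ab => (ab.1 == p) || (ab.2 == p)) B.

Inductive brk_reach (w : seq bool) : seq (nat * nat) -> Prop :=
| brk_nil : brk_reach w [::]
| brk_step B a b :
    brk_reach w B -> a < b -> b < size w ->
    nth false w a -> ~~ nth false w b ->
    ~~ bracketed B a -> ~~ bracketed B b ->
    (forall m, a < m < b -> bracketed B m) ->
    brk_reach w ((a, b) :: B).

(* Termination: the unbracketed letters form a word i^a j^b. *)
Definition brk_final (w : seq bool) (B : seq (nat * nat)) : Prop :=
  forall a b, a < b -> b < size w -> nth false w a -> ~~ nth false w b ->
    bracketed B a || bracketed B b.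

Definition unbr_i (w : seq bool) (B : seq (nat * nat)) (p : nat) : bool :=
  [&& p < size w, ~~ nth false w p & ~~ bracketed B p].

Definition stepSW (a b : box) : bool :=
  (b == (a.1.+1, a.2)) || ((0 < a.2) && (b == (a.1, a.2.-1))).

Definition jbox (T : ptab) (j : nat) (p : box) : bool :=
  (cval T p == Some (prm j)) || (cval T p == Some (unp j)).

Definition max_ribbon (T : ptab) (j : nat) (s : box) (rest : seq box) : Prop :=
  [/\ all (jbox T j) (s :: rest), path stepSW s rest &
      forall b, stepSW (last s rest) b -> ~~ jbox T j b].

(* Main.v *)
Require Import Defs.
From mathcomp Require Import all_boot zify.
Set Implicit Arguments. Unset Strict Implicit. Unset Printing Implicit Defensive.


Section Brk.
Variable w : seq bool.

Lemma brk_R1 B : brk_reach w B -> forall ab, ab \in B ->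
  [/\ ab.1 < ab.2, ab.2 < size w, nth false w ab.1 & ~~ nth false w ab.2].
Proof.
elim=> [|B' a b HB IH ltab lbs wa wb na nb Hm] ab //.
rewrite inE => /orP [/eqP -> //|]; exact: IH.
Qed.

Lemma brk_R2 B : brk_reach w B -> forall ab cd, ab \in B -> cd \in B ->
  ab.2 = cd.2 -> ab = cd.
Proof.
elim=> [|B' a b HB IH ltab lbs wa wb na nb Hm] ab cd //.
rewrite !inE => /orP [/eqP ->|Hab] /orP [/eqP ->|Hcd] //= E.
- case/negP: nb; apply/hasP; exists cd => //=; by rewrite E eqxx orbT.
- case/negP: nb; apply/hasP; exists ab => //=; by rewrite -E eqxx orbT.
- exact: IH.
Qed.

Lemma bracketed_cons B ab m : bracketed B m -> bracketed (ab :: B) m.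
Proof. by rewrite /bracketed /= => ->; rewrite orbT. Qed.

Lemma brk_R3 B : brk_reach w B -> forall ab, ab \in B ->
  forall m, ab.1 < m < ab.2 -> bracketed B m.
Proof.
elim=> [|B' a b HB IH ltab lbs wa wb na nb Hm] ab //.
rewrite inE => /orP [/eqP -> m /= Hm'|Hab m Hm'].
- by rewrite Hm // orbT.
- apply: bracketed_cons; exact: (IH _ Hab).
Qed.

Lemma brk_count B n a : brk_reach w B -> brk_final w B -> unbr_i w B n ->
  count (fun m => (a <= m < n) && nth false w m) (iota 0 (size w)) <=
  count (fun m => (a <= m < n) && ~~ nth false w m) (iota 0 (size w)).
Proof.
move=> HB Hf /and3P [ns wn bn].
rewrite -!size_filter.
set J := [seq m <- iota 0 (size w) | (a <= m < n) && nth false w m].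
set I := [seq m <- iota 0 (size w) | (a <= m < n) && ~~ nth false w m].
pose f m := (nth (0,0) B (find (fun ab : nat * nat => ab.1 == m) B)).2.
have Hp : forall m, m \in J -> has (fun ab : nat * nat => ab.1 == m) B.
  move=> m; rewrite mem_filter mem_iota => /andP [/andP [/andP [am mn] wm] _].
  have := Hf m n mn ns wm wn; rewrite (negbTE bn) orbF => /hasP [ab abB /orP [E|E]].
    by apply/hasP; exists ab.
  have [_ _ _] := brk_R1 HB abB; by rewrite (eqP E) wm.
have Hpr : forall m, m \in J -> let pr := nth (0,0) B (find (fun ab : nat * nat => ab.1 == m) B) in
    pr \in B /\ pr.1 = m.
  move=> m mJ /=; have h := Hp m mJ; split; first by rewrite mem_nth // -has_find.
  exact/eqP/(nth_find (0,0) h).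
have -> : size J = size (map f J) by rewrite size_map.
apply: uniq_leq_size.
  rewrite map_inj_in_uniq ?filter_uniq ?iota_uniq //.
  move=> m1 m2 h1 h2 E; have [p1B p1m] := Hpr _ h1; have [p2B p2m] := Hpr _ h2.
  by rewrite -p1m -p2m (brk_R2 HB p1B p2B E).
move=> z /mapP [m mJ ->]; have [pB pm] := Hpr _ mJ.
have [lt12 ls w1 w2] := brk_R1 HB pB.
move: (mJ); rewrite mem_filter mem_iota => /andP [/andP [/andP [am mn] wm] _].
rewrite mem_filter mem_iota /f w2 andbT /=.
rewrite pm in lt12.
have fn : (nth (0,0) B (find (fun ab : nat * nat => ab.1 == m) B)).2 < n.
  case: (ltngtP _ n) => // [ngt|E].
    case/negP: bn; apply: (brk_R3 HB pB); by rewrite pm mn.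
  case/negP: bn; apply/hasP; eexists; first exact: pB. by rewrite /= E eqxx orbT.
by rewrite fn add0n ls (leq_trans am (ltnW lt12)).
Qed.
End Brk.


Definition readlt (p q : box) : bool := (q.1 < p.1) || ((p.1 == q.1) && (p.2 < q.2)).

Lemma readlt_trans : transitive readlt.
Proof.
move=> [a1 a2] [b1 b2] [c1 c2]; rewrite /readlt /=.
case/orP=> [h|/andP [/eqP h h']]; case/orP=> [g|/andP [/eqP g g']];
  apply/orP; (try by left; lia); right; apply/andP; split; try apply/eqP; lia.
Qed.

Lemma readlt_irr : irreflexive readlt.
Proof. move=> [a b]; rewrite /readlt /= ltnn eqxx ltnn. by []. Qed.

Definition ebox (T : ptab) (p : box) := ent T p.1 p.2.

Lemma row_pairwise T L :
  (forall r s, r \in L -> s \in L -> True) ->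
  pairwise (fun r s : nat => s < r) L ->
  pairwise readlt (flatten [seq row_boxes T r | r <- L]).
Proof.
move=> _; elim: L => [|r L IH] //= /andP [Hr HL].
rewrite pairwise_cat IH // andbT; apply/andP; split.
  apply/allrelP => p q /mapP [c _ ->] /flattenP [s /mapP [r' r'L ->] /mapP [c' _ ->]].
  by rewrite /readlt /= (allP Hr _ r'L).
rewrite /row_boxes pairwise_map.
apply: (sub_pairwise (r := ltn)); last by rewrite -sorted_pairwise ?iota_ltn_sorted //; exact: ltn_trans.
by move=> a b h; rewrite /= /readlt /= eqxx; apply/orP; right; exact: h.
Qed.

Lemma rev_iota_pairwise N : pairwise (fun r s : nat => s < r) (rev (iota 0 N)).
Proof.
rewrite -sorted_pairwise; first by rewrite rev_sorted iota_ltn_sorted.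
move=> a b c h g; exact: ltn_trans g h.
Qed.

Lemma wb_pairwise T i : pairwise readlt (ij_boxes T i).
Proof.
apply: pairwise_filter; apply: pairwise_filter.
apply: row_pairwise => //; exact: rev_iota_pairwise.
Qed.

Lemma mem_wb T i p : (p \in ij_boxes T i) =
  in_shape T p && ((ebox T p == unp i) || (ebox T p == unp i.+1)).
Proof.
rewrite /ij_boxes /reading_boxes !mem_filter.
case: p => [r c] /=; rewrite /ebox /=.
case E: ((ent T r c == unp i) || (ent T r c == unp i.+1)); rewrite ?andbF //= andbT.
have -> : ~~ odd (ent T r c) by case/orP: E => /eqP ->; rewrite /unp odd_double.
rewrite /=; apply/flattenP/idP.
  move=> [s /mapP [r' _ ->] /mapP [c' ]]; rewrite mem_iota => /andP [h1 h2] [-> ->].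
  by rewrite /in_shape /= h1; lia.
rewrite /in_shape /= => /andP [h1 h2].
have rl : r < size (lam T).
  rewrite ltnNge; apply/negP => h; move: h2; by rewrite nth_default.
exists (row_boxes T r); first by apply/mapP; exists r => //; rewrite mem_rev mem_iota.
apply/mapP; exists c => //; rewrite mem_iota h1 /=; lia.
Qed.


Section Count.
Variables (T : ptab) (i : nat) (B : seq (nat * nat)) (n : nat).
Let wb := ij_boxes T i.
Let w := [seq ent T p.1 p.2 == unp i.+1 | p <- wb].
Hypotheses (HB : brk_reach w B) (Hf : brk_final w B) (Hn : unbr_i w B n).
Let x := nth (0,0) wb n.

Lemma nsz : n < size wb.
Proof. by case/and3P: Hn; rewrite size_map. Qed.

Lemma seg_idx b m : m < size wb ->
  (~~ readlt (nth (0,0) wb m) b && readlt (nth (0,0) wb m) x) =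
  (find (fun p => ~~ readlt p b) wb <= m < n).
Proof.
move=> ms; have Hpw := elimT (pairwiseP (0,0)) (wb_pairwise T i).
have Hx : readlt (nth (0,0) wb m) x = (m < n).
  case: (ltngtP m n) => [h|h|->]; last by rewrite readlt_irr.
    exact: Hpw ms nsz h.
  apply/negP => h'; have h2 : readlt x (nth (0,0) wb m).
    exact: Hpw nsz ms h.
  by have := readlt_trans h' h2; rewrite readlt_irr.
rewrite Hx; congr (_ && _).
set a := find _ _.
case: (ltnP m a) => h.
  by rewrite (before_find _ h).
have ha : has (fun p => ~~ readlt p b) wb by rewrite has_find; exact: leq_ltn_trans h ms.
have := nth_find (0,0) ha; rewrite -/a.
case: (ltngtP a m) h => // [h _|-> _ //] na.
apply/negP => hm; case/negP: na.
apply: readlt_trans hm.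
apply: Hpw (ltn_trans h ms) ms h.
Qed.

Lemma seg_count b :
  count (fun p => ~~ readlt p b && readlt p x && (ebox T p == unp i.+1)) wb <=
  count (fun p => ~~ readlt p b && readlt p x && (ebox T p == unp i)) wb.
Proof.
rewrite -[in X in X <= _](mkseq_nth (0,0) wb) -[in X in _ <= X](mkseq_nth (0,0) wb) /mkseq !count_map.
have sw : size w = size wb by rewrite size_map.
apply: leq_trans (leq_trans (@brk_count w B n (find (fun p => ~~ readlt p b) wb) HB Hf Hn) _).
  rewrite sw leq_eqVlt; apply/orP; left; apply/eqP; apply: eq_in_count => m.
  rewrite mem_iota add0n => /= ms; rewrite (seg_idx _ ms).
  by rewrite /w (nth_map (0,0)).
rewrite sw leq_eqVlt; apply/orP; left; apply/eqP; apply: eq_in_count => m.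
rewrite mem_iota add0n => /= ms; rewrite (seg_idx _ ms).
rewrite /w (nth_map (0,0)) //; congr (_ && _).
have := mem_nth (0,0) ms; rewrite mem_wb => /andP [_].
rewrite /ebox /unp; case/orP => /eqP ->; apply/idP/idP => /eqP ?; apply/eqP; lia.
Qed.

Definition SE (p : box) : box := (p.1.+1, p.2.+1).

Lemma no_extra b y :
  y \in wb -> ~~ readlt y b -> readlt y x -> ebox T y = unp i.+1 ->
  (forall p, p \in wb -> ~~ readlt p b -> readlt p x -> ebox T p = unp i ->
     [/\ SE p \in wb, ~~ readlt (SE p) b, readlt (SE p) x, ebox T (SE p) = unp i.+1 & SE p != y]) ->
  False.
Proof.
move=> yw y1 y2 y3 H.
have := seg_count b; apply/negP; rewrite -ltnNge -!size_filter.
set I := filter _ wb; set J := filter _ wb.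
have uw : uniq wb := pairwise_uniq readlt_irr (wb_pairwise T i).
have -> : size I = size (map SE I) by rewrite size_map.
apply: (uniq_leq_size (s1 := y :: map SE I)).
  rewrite /= map_inj_in_uniq; last by move=> [a1 a2] [b1 b2] _ _ [-> ->].
  rewrite (filter_uniq _ uw) andbT.
    apply/mapP => [[p]]; rewrite mem_filter => /andP [/andP [/andP [p1 p2] /eqP p3] pw] E.
    by have [_ _ _ _] := H p pw p1 p2 p3; rewrite -E eqxx.
move=> z; rewrite inE => /orP [/eqP ->|/mapP [p]].
  by rewrite mem_filter yw y1 y2 y3 eqxx.
rewrite mem_filter => /andP [/andP [/andP [p1 p2] /eqP p3] pw] ->.
have [q1 q2 q3 q4 _] := H p pw p1 p2 p3.
by rewrite mem_filter q1 q2 q3 q4 eqxx.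
Qed.
End Count.


Lemma sorted_nthS (s : seq nat) r : sorted geq s -> nth 0 s r.+1 <= nth 0 s r.
Proof.
elim: s r => [|a s IH] r //= Hs.
case: r => [|r] /=.
  by case: s Hs {IH} => [|b s] //= /andP [h _].
by apply: IH; exact: path_sorted Hs.
Qed.

Section Tab.
Variables (k : nat) (T : ptab).
Hypothesis HT : is_primed_tableau k T.

Lemma shapeS w v1 v2 v : in_shape T (w, v1) -> in_shape T (w.+1, v2) -> v1 <= v -> v <= v2 ->
  in_shape T (w.+1, v).
Proof.
case: HT => [[_ smu _ _] _]; rewrite /in_shape /= => /andP [h1 h2] /andP [g1 g2] a1 a2.
have hm := sorted_nthS w smu; apply/andP; split; lia.
Qed.

Lemma shapeR w v1 v2 v : in_shape T (w, v1) -> in_shape T (w, v2) -> v1 <= v -> v <= v2 ->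
  in_shape T (w, v).
Proof. rewrite /in_shape /= => /andP [h1 h2] /andP [g1 g2] a1 a2; apply/andP; split; lia. Qed.

Lemma rowm w c1 c2 : in_shape T (w, c1) -> in_shape T (w, c2) -> c1 <= c2 ->
  ebox T (w, c1) <= ebox T (w, c2).
Proof. case: HT => [_ [[H _] _]]; exact: H. Qed.

Lemma colm c r1 r2 : in_shape T (r1, c) -> in_shape T (r2, c) -> r1 <= r2 ->
  ebox T (r1, c) <= ebox T (r2, c).
Proof. case: HT => [_ [[_ H] _]]; exact: H. Qed.

Lemma rowp w c1 c2 : in_shape T (w, c1) -> in_shape T (w, c2) -> c1 < c2 ->
  ebox T (w, c1) = ebox T (w, c2) -> ~~ odd (ebox T (w, c1)).
Proof. case: HT => [_ [_ [H _]]]; exact: H. Qed.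

Lemma colp c r1 r2 : in_shape T (r1, c) -> in_shape T (r2, c) -> r1 < r2 ->
  ebox T (r1, c) = ebox T (r2, c) -> odd (ebox T (r1, c)).
Proof. case: HT => [_ [_ [_ H]]]; exact: H. Qed.

Lemma col_strict_even c r : in_shape T (r, c) -> in_shape T (r.+1, c) -> ~~ odd (ebox T (r, c)) ->
  ebox T (r, c) < ebox T (r.+1, c).
Proof.
move=> h1 h2 ev; rewrite ltn_neqAle colm // andbT; apply/eqP => E.
by have := colp h1 h2 (ltnSn r) E; rewrite (negbTE ev).
Qed.

Lemma SEj i w v t : in_shape T (w, v) -> ebox T (w, v) = unp i ->
  in_shape T (w.+1, t) -> v < t -> ebox T (w.+1, t) <= unp i.+1 ->
  in_shape T (w.+1, v.+1) /\ ebox T (w.+1, v.+1) = unp i.+1.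
Proof.
move=> h1 e1 h2 vt e2.
have s0 : in_shape T (w.+1, v) by apply: (shapeS h1 h2); lia.
have s1 : in_shape T (w.+1, v.+1) by apply: (shapeS h1 h2); lia.
split=> //.
have a := col_strict_even h1 s0; rewrite e1 /unp odd_double in a; have {}a := a erefl.
have b := rowm s0 s1 (leqnSn v).
have c := rowm s1 h2 vt.
move: a b c e2; rewrite /unp => a b c e2.
have : ebox T (w.+1, v.+1) != (i.*2).+1.
  apply/eqP => E.
  have E2 : ebox T (w.+1, v) = ebox T (w.+1, v.+1) by lia.
  by have := rowp s0 s1 (ltnSn v) E2; rewrite E2 E /= odd_double.
move=> ne; apply/eqP; rewrite eqn_leq; apply/andP; split; [lia|].
move: ne; rewrite neq_ltn => /orP [h|h]; lia.
Qed.
End Tab.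

Lemma path_rows (p0 : box) s b : path stepSW p0 s -> b \in p0 :: s -> p0.1 <= b.1 /\ b.2 <= p0.2.
Proof.
elim: s p0 => [|y s IH] p0 /=; first by rewrite inE => _ /eqP ->.
case/andP=> st ps; rewrite inE => /orP [/eqP -> //|bs].
have [h1 h2] := IH y ps bs.
move: st; rewrite /stepSW => /orP [/eqP E|/andP [_ /eqP E]]; rewrite E /= in h1 h2; split; lia.
Qed.

Lemma path_lemma (p0 : box) s b w : path stepSW p0 s -> b \in s -> p0.1 <= w < b.1 ->
  exists z, [/\ z \in p0 :: s, z.1 = w, (w.+1, z.2) \in s & b.2 <= z.2].
Proof.
elim: s p0 => [|y s IH] p0 //= /andP [st ps]; rewrite inE => /orP [/eqP ->|bs] hw.
  move: st; rewrite /stepSW => /orP [/eqP E|/andP [_ /eqP E]]; rewrite E /= in hw *; last lia.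
  have -> : w = p0.1 by lia.
  by exists p0; split; rewrite ?inE ?eqxx.
have [h1 h2] := path_rows ps (b := b) (ltac:(by rewrite inE bs orbT)).
case: (leqP y.1 w) => hy.
  have [z [z1 z2 z3 z4]] := IH y ps bs (ltac:(by rewrite hy; case/andP: hw)).
  exists z; split=> //; first by rewrite inE z1 orbT.
  by rewrite inE z3 orbT.
move: st; rewrite /stepSW => /orP [/eqP E|/andP [_ /eqP E]]; rewrite E /= in hy h1 h2; last lia.
have -> : w = p0.1 by lia.
exists p0; split; rewrite ?inE ?eqxx ?E //; by rewrite eqxx.
Qed.


Ltac slia := repeat match goal with H : ?T |- _ =>
  lazymatch T with
  | is_true (_ \in _) => clear H
  | is_true (unbr_i _ _ _) => clear H
  | is_true _ => fail
  | @eq nat _ _ => fail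
  | _ => clear H end end; lia.

Lemma cvalP T p v : cval T p = Some v <-> in_shape T p /\ ebox T p = v.
Proof.
rewrite /cval /ebox; case: ifP => h; split => //; first by case=> ->.
  by case=> _ ->. by case.
Qed.

Theorem lemma3p1 (k : nat) (T : ptab) (i : nat) (B : seq (nat * nat)) (n : nat) :
  is_primed_tableau k T -> 1 <= i -> i <= k.-1 ->
  let j := i.+1 in
  let wb := ij_boxes T i in
  let w := [seq ent T p.1 p.2 == unp j | p <- wb] in
  brk_reach w B -> brk_final w B ->
  (* n is the position of the rightmost unbracketed i *)
  unbr_i w B n -> (forall m, unbr_i w B m -> m <= n) ->
  let x := nth (0, 0) wb n in
  let Ex := (x.1, x.2.+1) in
  let Sx := (x.1.+1, x.2) in
  (* (a) case F2, q = E_x *)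
  (cval T Ex = Some (prm j) -> gt_ext (cval T (Ex.1.+1, Ex.2)) (unp j)) /\
  (* (b) case F3 *)
  (geq_ext (cval T Ex) (unp j) ->
   (cval T Sx = Some (prm j) \/ cval T Sx = Some (unp j)) ->
   forall rest, max_ribbon T j Sx rest ->
     (forall b, b \in Sx :: rest -> cval T b = Some (unp j) ->
        [/\ 0 < b.1, 0 < b.2 & cval T (b.1.-1, b.2.-1) = Some (unp i)]) /\
     cval T (last Sx rest) = Some (prm j)).
Proof.
move=> HT _ _ j wb w HB Hf Hn _ x Ex Sx.
have nsz : n < size wb by exact: nsz Hn.
have xw : x \in wb by exact: mem_nth.
have := xw; rewrite /wb mem_wb => /andP [xs _].
have xi : ebox T x = unp i.
  move: (xw); rewrite /wb mem_wb => /andP [_ /orP [/eqP //|/eqP E]].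
  by case/and3P: Hn => _; rewrite /w (nth_map (0,0)) // -/x -/(ebox T x) E eqxx.
have NE := no_extra HB Hf Hn.
split.
  move=> _; rewrite /cval; case: ifP => //= Hq; rewrite ltnNge; apply/negP => Hle.
  have [ys ye] : in_shape T (x.1.+1, x.2.+1) /\ ebox T (x.1.+1, x.2.+1) = unp i.+1.
    apply: (SEj HT (w := x.1) (v := x.2) (t := x.2.+1)) => //.
  pose P a := in_shape T (x.1, a) && (ebox T (x.1, a) == unp i).
  have exP : exists a, P a by exists x.2; by rewrite /P -surjective_pairing xs xi eqxx.
  case: (ex_minnP exP) => al Pal minal.
  have alx : al <= x.2 by apply: minal; by rewrite /P -surjective_pairing xs xi eqxx.
  move: Pal; rewrite /P => /andP [als /eqP ale].
  apply: (NE (x.1.+1, al) (x.1.+1, x.2.+1)).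
  - by rewrite /wb mem_wb ys ye eqxx orbT.
  - by rewrite /readlt /= ltnn eqxx /= ltnNge ltnW.
  - by rewrite /readlt /= ltnSn.
  - exact: ye.
  move=> [pw pv]; rewrite -/wb -/x mem_wb /readlt /= => /andP [ps _] h1 h2 pe.
  have [E|[E pvx]] : pw = x.1.+1 \/ (pw = x.1 /\ pv < x.2) by lia.
    subst pw; exfalso.
    have s0 : in_shape T (x.1.+1, al) by apply: (shapeS HT als ps) => //; lia.
    have a1 := col_strict_even HT als s0; rewrite ale /unp odd_double in a1.
    have {}a1 := a1 erefl.
    have a2 := rowm HT s0 ps (ltac:(lia)).
    rewrite pe /unp in a2; lia.
  subst pw.
  have alp : al <= pv by apply: minal; rewrite /P ps pe eqxx.
  have [s1 e1] := SEj HT ps pe Hq (ltac:(lia)) Hle.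
  split.
  - by rewrite /SE /= mem_wb s1 e1 eqxx orbT.
  - apply/negP => /orP [h|/andP [_ h]]; lia.
  - by rewrite ltnSn.
  - exact: e1.
  - apply/eqP => [[h]]; lia.
move=> _ _ rest [Hall Hpath Hmaxr].
have jb : forall z, z \in Sx :: rest -> in_shape T z /\ (ebox T z = prm j \/ ebox T z = unp j).
  move=> z /(allP Hall); rewrite /jbox => /orP [/eqP /cvalP [? ?]|/eqP /cvalP [? ?]]; split => //; by [left | right].
have Hp0 : path stepSW x (Sx :: rest) by rewrite /= Hpath /stepSW eqxx.
have prj : prm j = (unp i).+1 by rewrite /prm /unp /j; slia.
have unj : unp j = (unp i).+2 by rewrite /unp /j; slia.
have evi : ~~ odd (unp i) by rewrite /unp odd_double.
have Hbelow : forall z, z \in Sx :: rest -> (z.1.+1, z.2) \in Sx :: rest -> ebox T z = prm j.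
  move=> [z1 z2] zR zR'; have [zs ze] := jb _ zR; have [zs' ze'] := jb _ zR'.
  have m := colm HT zs zs' (leqnSn z1).
  case: ze => // ze; exfalso; rewrite ze in m.
  case: ze' m => ze' m.
    by rewrite ze' prj unj ltnn in m.
  have := colp HT zs zs' (ltnSn z1) (etrans ze (esym ze')); by rewrite ze unj /= evi.
have claim1 : forall b, b \in Sx :: rest -> cval T b = Some (unp j) ->
    [/\ 0 < b.1, 0 < b.2 & cval T (b.1.-1, b.2.-1) = Some (unp i)].
  move=> [b1 b2] bR /cvalP [bs be] /=.
  case E: [&& 0 < b1, 0 < b2 & cval T (b1.-1, b2.-1) == Some (unp i)].
    by case/and3P: E => h1 h2 /eqP h3.
  exfalso.
  have [bx _] := path_rows Hp0 (b := (b1, b2)) (ltac:(by rewrite inE bR orbT)).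
  have bx' : x.1 < b1.
    have [h _] := path_rows Hpath bR; exact: h.
  apply: (NE (b1, b2) (b1, b2)).
  - by rewrite -/wb mem_wb bs be eqxx orbT.
  - by rewrite readlt_irr.
  - by rewrite -/wb -/x /readlt /= bx'.
  - exact: be.
  move=> [pw pv]; rewrite -/wb -/x mem_wb /readlt /= => /andP [ps _] h1 h2 pe.
  have [E1|E1] : pw = b1 \/ pw < b1 by slia.
    subst pw; exfalso; have := rowm HT bs ps (ltac:(slia)); rewrite be pe unj; slia.
  have [z [zin z1 zR z2]] := path_lemma Hp0 bR (w := pw) (ltac:(apply/andP; rewrite /=; split; slia)).
  rewrite /= in z2.
  have [zs zx] : in_shape T z /\ (z = x \/ ebox T z = prm j).
    move: zin; rewrite inE => /orP [/eqP ->|zR0]; first by split => //; left.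
    have [zs _] := jb _ zR0; split => //; right; apply: Hbelow => //.
    by rewrite -z1 in zR.
  have zle : ebox T z <= prm j.
    case: zx => [->|->] //; rewrite xi prj; slia.
  have pvz : pv < z.2.
    case: zx => [zx|ze].
      subst z; rewrite /= in z1; subst pw; by move: h2; rewrite ltnn eqxx.
    rewrite ltnNge; apply/negP => h.
    have zs2 : in_shape T (pw, z.2) by rewrite -z1 -surjective_pairing.
    have := rowm HT zs2 ps h; rewrite pe -z1 -surjective_pairing ze prj; slia.
  have [zRs zRe] := jb _ zR.
  have [s1 e1] := SEj HT ps pe zRs pvz (ltac:(case: zRe => ->; [rewrite prj unj; exact: leqnSn | exact: leqnn])).
  have NWi : pv.+1 < b2 -> pw.+1 = b1 -> False.
    move=> hv hw; move/negP: E; apply; rewrite -hw /= (ltn_trans (ltn0Sn pv) hv) /=.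
    have zs2 : in_shape T (pw, z.2) by rewrite -z1 -surjective_pairing.
    have hbz : b2.-1 <= z.2 by exact: leq_trans (leq_pred b2) z2.
    have hpb : pv <= b2.-1 by rewrite -ltnS (ltn_predK hv); exact: ltnW hv.
    have hbz' : b2.-1 < z.2 by rewrite -ltnS (ltn_predK hv); exact: z2.
    have s2 : in_shape T (pw, b2.-1) by exact: (shapeR (v := b2.-1) ps zs2).
    apply/eqP/cvalP; split => //.
    have a1 := rowm HT ps s2 hpb.
    have a2 := rowm HT s2 zs2 hbz.
    have ez : ebox T (pw, z.2) = ebox T z by rewrite -z1 -surjective_pairing.
    case: zx => [zx|ze].
      rewrite ez zx xi in a2; rewrite pe in a1; by apply/eqP; rewrite eqn_leq a2 a1.
    rewrite ez ze prj in a2; rewrite pe in a1.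
    have : ebox T (pw, b2.-1) != (unp i).+1.
      apply/eqP => h; have h' : ebox T (pw, b2.-1) = ebox T (pw, z.2) by rewrite ez ze prj.
      by have := rowp HT s2 zs2 hbz' h'; rewrite h /= evi.
    move=> ne; have a3 : ebox T (pw, b2.-1) < (unp i).+1 by rewrite ltn_neqAle ne a2.
    by apply/eqP; rewrite eqn_leq a1 andbT -ltnS.
  split.
  - by rewrite /SE /= mem_wb s1 e1 eqxx orbT.
  - apply/negP => /orP [h|/andP [/eqP h h']]; first by rewrite ltnS leqNgt E1 in h.
    exact: NWi h' h.
  - have xpw : x.1 <= pw by case/orP: h2 => [/ltnW //|/andP [/eqP -> _]].
    by rewrite /= ltnS xpw.
  - exact: e1.
  - apply/eqP => [[h h']]; move/negP: E; apply.
    rewrite -h -h' /= -pe; apply/eqP/cvalP; split => //.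
split => //.
set q := last Sx rest.
have qR : q \in Sx :: rest by exact: mem_last.
have [qs qe] := jb _ qR.
case: qe => qe; first by apply/cvalP.
exfalso.
have [q1 q2 /cvalP [nws nwe]] := claim1 _ qR (ltac:(by apply/cvalP)).
have := Hmaxr (q.1, q.2.-1); rewrite /stepSW q2 eqxx orbT => /(_ isT) /negP; apply.
have qs' : in_shape T ((q.1.-1).+1, q.2) by rewrite prednK // -surjective_pairing.
have ws0 : in_shape T ((q.1.-1).+1, q.2.-1) := shapeS HT nws qs' (leqnn _) (leq_pred _).
have a1 := col_strict_even HT nws ws0 (ltac:(by rewrite nwe)).
rewrite prednK // in ws0 qs' a1.
have a2 := rowm HT ws0 qs' (leq_pred _).
rewrite -surjective_pairing qe unj in a2; rewrite nwe in a1.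
rewrite /jbox /cval ws0 prj unj /=.
move: a1 a2; rewrite /ebox /=; move: (ent T q.1 q.2.-1) (unp i) => e u a1 a2.
apply/orP; have [h|h] : e = u.+1 \/ e = u.+2 by clear -a1 a2; lia.
  by left; rewrite h.
by right; rewrite h.
Qed.
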